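(* Let $\mathcal{H}=(V,H,\bm{w})$ be a finite, connected, weighted undirected hypergraph in which every hyperedge has at least two vertices. Then for any two distinct vertices $u,v\in V$ and any hyperedge $h\in H$, the functions $\alpha\mapsto\kappa_\alpha(u,v)$ and $\alpha\mapsto\kappa_\alpha(h)$ are concave on $[0,1]$.
   Context: A weighted undirected hypergraph $\mathcal{H}=(V,H,\bm{w})$ has a finite vertex set $V$, a finite set $H$ of hyperedges (subsets of $V$), and positive weights $w_h>0$ for $h\in H$. Distinct vertices $u,v$ are adjacent ($u\sim v$) if some hyperedge contains both; $\Gamma(x)=\{z\in V: z\sim x\}$. The degree is $\mathrm{Deg}(x)=\sum_{h\ni x}w_h$. A hyperpath connecting $u$ and $v$ is a sequence of hyperedges $h_1,\dots,h_l$ with $u\in h_1$, $v\in h_l$, $h_j\cap h_{j+1}\neq\emptyset$ for $1\le j\le l-1$; $\mathcal{H}$ is connected if every two distinct vertices are connected by a hyperpath. For $u\neq v$, $d(u,v)=\inf_\gamma\sum_{h\in\gamma}w_h$ over hyperpaths $\gamma$ connecting $u,v$, and $d(u,u)=0$. For a hyperedge $h=\{x_1,\dots,x_k\}$, $L(h)=\min_{1\le i<j\le k}d(x_i,x_j)$. For probability measures $\mu,\nu$ on $V$, $W(\mu,\nu)=\inf_\pi\sum_{x,y\in V}\pi(x,y)d(x,y)$, the infimum over couplings $\pi$ of $\mu,\nu$ (probability measures on $V\times V$ with marginals $\mu$ and $\nu$). For $\alpha\in[0,1]$ and $x\in V$, the measure $\mu_x^\alpha$ is: $\mu_x^\alpha(x)=\alpha$;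 $\mu_x^\alpha(z)=(1-\alpha)\sum_{h'\in H:\,x,z\in h'}\frac{1}{|h'|-1}\frac{w_{h'}}{\mathrm{Deg}(x)}$ for $z\in\Gamma(x)$; and $0$ otherwise. For distinct $u,v$, $\kappa_\alpha(u,v)=1-\frac{W(\mu_u^\alpha,\mu_v^\alpha)}{d(u,v)}$. For $h=\{x_1,\dots,x_k\}$, $W_\alpha(h)=\sum_{1\le i<j\le k}W(\mu_{x_i}^\alpha,\mu_{x_j}^\alpha)$ and $\kappa_\alpha(h)=1-\frac{W_\alpha(h)}{L(h)}$. *)

(* Defs.v *)
From mathcomp Require Import all_boot all_order all_algebra.
From mathcomp Require Import boolp classical_sets reals.
Set Implicit Arguments. Unset Strict Implicit. Unset Printing Implicit Defensive.
Import Order.TTheory GRing.Theory Num.Theory.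
Local Open Scope ring_scope.
Local Open Scope classical_set_scope.

Section Hypergraph.
Variables (R : realType) (V : finType).
(* A weighted hypergraph: the set of hyperedges H (subsets of V) and the
   weight function w (only its values on H matter). *)
Variables (H : {set {set V}}) (w : {set V} -> R).

Definition weights_pos : Prop := forall h, h \in H -> 0 < w h.
Definition edges_ge2 : Prop := forall h, h \in H -> (2 <= #|h|)%N.

Definition adjacent (u v : V) : bool :=
  (u != v) && [exists h in H, (u \in h) && (v \in h)].

Definition Deg (x : V) : R := \sum_(h in H | x \in h) w h.

Definition hyperpath (u v : V) (s : seq {set V}) : bool :=
  [&& s != [::], all (fun h => h \in H) s, u \in head (finset.set0 : {set V}) s, v \in last (finset.set0 : {set V}) s
    & path (fun a b => a :&: b != (finset.set0 : {set V})) (head (finset.set0 : {set V}) s) (behead s)].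

Definition connected_hg : Prop :=
  forall u v : V, u != v -> exists s, hyperpath u v s.

Definition dist (u v : V) : R :=
  if u == v then 0
  else inf [set r : R | exists s, hyperpath u v s /\ r = \sum_(h <- s) w h].

Definition Lh (h : {set V}) : R :=
  inf [set r : R | exists x y, [/\ x \in h, y \in h, x != y & r = dist x y]].

Definition coupling (mu nu : V -> R) (pi : V * V -> R) : Prop :=
  [/\ forall p, 0 <= pi p,
      forall x, \sum_(y : V) pi (x, y) = mu x
    & forall y, \sum_(x : V) pi (x, y) = nu y].

Definition W1 (mu nu : V -> R) : R :=
  inf [set r : R | exists pi : V * V -> R,
         coupling mu nu pi /\ r = \sum_(p : V * V) pi p * dist p.1 p.2].

Definition mu_meas (alpha : R) (x : V) (z : V) : R :=
  if z == x then alpha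
  else if adjacent x z then
    (1 - alpha) * \sum_(h' in H | (x \in h') && (z \in h'))
                     ((#|h'|%:R - 1)^-1 * (w h' / Deg x))
  else 0.

Definition kappa_vert (alpha : R) (u v : V) : R :=
  1 - W1 (mu_meas alpha u) (mu_meas alpha v) / dist u v.

(* sum over unordered pairs {x_i, x_j}, i < j, via the enumeration order of V *)
Definition W_edge (alpha : R) (h : {set V}) : R :=
  \sum_(x in h) \sum_(y in h | (enum_rank x < enum_rank y)%N)
     W1 (mu_meas alpha x) (mu_meas alpha y).

Definition kappa_edge (alpha : R) (h : {set V}) : R :=
  1 - W_edge alpha h / Lh h.

End Hypergraph.

Definition concave_on01 (R : realType) (f : R -> R) : Prop :=
  forall a b t : R, 0 <= a <= 1 -> 0 <= b <= 1 -> 0 <= t <= 1 ->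
    (1 - t) * f a + t * f b <= f ((1 - t) * a + t * b).

(* Main.v *)
Require Import Defs.
From mathcomp Require Import all_boot all_order all_algebra.
From mathcomp Require Import boolp classical_sets reals.
From mathcomp Require Import ring lra zify.
Import Order.TTheory GRing.Theory Num.Theory.
Local Open Scope ring_scope.

Section S.
Variables (R : realType) (V : finType) (H : {set {set V}}) (w : {set V} -> R).
Hypothesis wpos : weights_pos H w.
Hypothesis e2 : edges_ge2 H.

Lemma inf_ge0 (E : set R) : (forall r, E r -> 0 <= r) -> 0 <= inf E.
Proof.
move=> E0; have [hE|nE] := pselect (has_inf E).
  by apply: lb_le_inf; [case: hE | move=> r /E0].
by rewrite inf_out.
Qed.

Lemma dist_ge0 x y : 0 <= dist H w x y.
Proof.
rewrite /dist; case: eqP => // _; apply: inf_ge0 => r [s [/and5P[_ hs _ _ _] ->]].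
rewrite big_seq; apply: sumr_ge0 => h hin; apply: ltW; apply: wpos.
by move/allP: hs => /(_ h hin).
Qed.

Lemma Deg_ge0 x : 0 <= Deg H w x.
Proof. by apply: sumr_ge0 => h /andP[hH _]; exact/ltW/wpos. Qed.

Lemma Deg_gt0 x h0 : h0 \in H -> x \in h0 -> 0 < Deg H w x.
Proof.
move=> hH xh; rewrite /Deg (bigD1 h0) /=; last by rewrite hH xh.
have w0 : 0 < w h0 by exact: wpos.
rewrite ltr_wpDr // ; apply: sumr_ge0.
by move=> h /andP[/andP[hH' _] _]; exact/ltW/wpos.
Qed.

Lemma mu_ge0 a x z : 0 <= a <= 1 -> 0 <= mu_meas H w a x z.
Proof.
move=> /andP[a0 a1]; rewrite /mu_meas; case: eqP => // _; case: ifP => // _.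
apply: mulr_ge0; first lra.
apply: sumr_ge0 => h /andP[hH /andP[xh _]]; apply: mulr_ge0.
  rewrite invr_ge0 subr_ge0 ler1n; have := e2 _ hH; lia.
apply: divr_ge0; [exact/ltW/wpos | exact: Deg_ge0].
Qed.

Lemma mu_aff a b t x z :
  mu_meas H w ((1 - t) * a + t * b) x z =
  (1 - t) * mu_meas H w a x z + t * mu_meas H w b x z.
Proof.
rewrite /mu_meas; case: eqP => _; first by [].
case: ifP => _; last by ring.
by ring.
Qed.


Lemma mu_mass a x h0 : h0 \in H -> x \in h0 -> \sum_z mu_meas H w a x z = 1.
Proof.
move=> h0H xh0; have Dp := Deg_gt0 x h0 h0H xh0.
rewrite (bigD1 x) //= /mu_meas eqxx.
set c := fun h : {set V} => (#|h|%:R - 1)^-1 * (w h / Deg H w x).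
have step : forall z, z != x -> (if z == x then a else if adjacent H x z then
    (1 - a) * \sum_(h' in H | (x \in h') && (z \in h')) c h' else 0) =
    (1 - a) * \sum_(h' in H | (x \in h') && (z \in h')) c h'.
  move=> z zx; rewrite (negbTE zx); case: ifP => // nad.
  rewrite big1 ?mulr0 // => h /andP[hH /andP[xh zh]].
  move/negbT: nad; rewrite /adjacent eq_sym zx /= => /existsP; case.
  by exists h; rewrite hH xh zh.
rewrite (eq_bigr _ step) -mulr_sumr.
suff -> : \sum_(z | z != x) \sum_(h' in H | (x \in h') && (z \in h')) c h' = 1 by ring.
rewrite (exchange_big_dep (fun h => (h \in H) && (x \in h))) /=; last first.
  by move=> z h _ /andP[-> /andP[-> _]].
transitivity (\sum_(h in H | x \in h) w h / Deg H w x); last first.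
  by rewrite -mulr_suml divff // gt_eqF.
apply: eq_bigr => h /andP[hH xh].
rewrite (eq_bigl (fun z => z \in h :\ x)); last first.
  by move=> z; rewrite in_setD1 hH xh /=.
rewrite sumr_const.
have c1 : (1 <= #|h|)%N by have := e2 _ hH; lia.
have -> : #|h :\ x| = (#|h| - 1)%N by rewrite (cardsD1 x h) xh; lia.
rewrite /c -[X in X = _]mulr_natr (natrB _ c1) mulrC mulrA mulfV ?mul1r //.
rewrite subr_eq0 pnatr_eq1; have := e2 _ hH; lia.
Qed.


Local Open Scope classical_set_scope.
Definition Sset (m1 m2 : V -> R) := [set r : R | exists pi : V * V -> R,
         coupling m1 m2 pi /\ r = \sum_(p : V * V) pi p * dist H w p.1 p.2].

Lemma Sset_ge0 m1 m2 r : Sset m1 m2 r -> 0 <= r.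
Proof.
move=> [pi [[pi0 _ _] ->]]; apply: sumr_ge0 => p _; apply: mulr_ge0 => //.
exact: dist_ge0.
Qed.

Lemma Sset_ne (m1 m2 : V -> R) : (forall z, 0 <= m1 z) -> (forall z, 0 <= m2 z) ->
  \sum_z m1 z = 1 -> \sum_z m2 z = 1 -> Sset m1 m2 !=set0.
Proof.
move=> p1 p2 s1 s2.
exists (\sum_(p : V * V) (m1 p.1 * m2 p.2) * dist H w p.1 p.2).
exists (fun p => m1 p.1 * m2 p.2); split => //; split.
- by move=> p; apply: mulr_ge0.
- by move=> x; rewrite /= -mulr_sumr s2 mulr1.
- by move=> y; rewrite /= -mulr_suml s1 mul1r.
Qed.

Lemma W1_conv (m1a m2a m1b m2b m1c m2c : V -> R) t : 0 <= t <= 1 ->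
  Sset m1a m2a !=set0 -> Sset m1b m2b !=set0 ->
  (forall z, m1c z = (1 - t) * m1a z + t * m1b z) ->
  (forall z, m2c z = (1 - t) * m2a z + t * m2b z) ->
  W1 H w m1c m2c <= (1 - t) * W1 H w m1a m2a + t * W1 H w m1b m2b.
Proof.
move=> /andP[t0 t1] nea neb e1 e2'.
have lbS m1 m2 : has_lbound (Sset m1 m2) by exists 0 => r /Sset_ge0.
have key : forall p q, Sset m1a m2a p -> Sset m1b m2b q ->
    W1 H w m1c m2c <= (1 - t) * p + t * q.
  move=> p q [pa [[pa0 pa1 pa2] ->]] [pb [[pb0 pb1 pb2] ->]].
  apply: (ge_inf (lbS m1c m2c)).
  exists (fun u => (1 - t) * pa u + t * pb u); split.
    split.
    - move=> u; apply: addr_ge0; apply: mulr_ge0 => //; lra.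
    - by move=> x; rewrite big_split /= -!mulr_sumr pa1 pb1 e1.
    - by move=> y; rewrite big_split /= -!mulr_sumr pa2 pb2 e2'.
  rewrite !mulr_sumr -big_split /=; apply: eq_bigr => u _; ring.
apply/ler_addgt0Pr => e e0.
have [p Sp pl] := inf_adherent e0 (conj nea (lbS m1a m2a)).
have [q Sq ql] := inf_adherent e0 (conj neb (lbS m1b m2b)).
apply: (le_trans (key p q Sp Sq)).
rewrite /W1 -/(Sset m1a m2a) -/(Sset m1b m2b).
have : (1 - t) * p <= (1 - t) * (inf (Sset m1a m2a) + e).
  by apply: ler_wpM2l; [lra | exact: ltW].
have : t * q <= t * (inf (Sset m1b m2b) + e).
  by apply: ler_wpM2l => //; exact: ltW.
lra.
Qed.


Lemma W1mu_conv x y hx hy a b t : hx \in H -> x \in hx -> hy \in H -> y \in hy ->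
  0 <= a <= 1 -> 0 <= b <= 1 -> 0 <= t <= 1 ->
  W1 H w (mu_meas H w ((1 - t) * a + t * b) x) (mu_meas H w ((1 - t) * a + t * b) y)
  <= (1 - t) * W1 H w (mu_meas H w a x) (mu_meas H w a y)
     + t * W1 H w (mu_meas H w b x) (mu_meas H w b y).
Proof.
move=> hxH xhx hyH yhy ha hb ht.
apply: W1_conv => //; try (by move=> z; exact: mu_aff).
- by apply: Sset_ne => [z|z||]; [exact: mu_ge0|exact: mu_ge0|exact: mu_mass hxH xhx|exact: mu_mass hyH yhy].
- by apply: Sset_ne => [z|z||]; [exact: mu_ge0|exact: mu_ge0|exact: mu_mass hxH xhx|exact: mu_mass hyH yhy].
Qed.

Lemma conc_aux (Wa Wb Wc d t : R) : 0 <= d -> Wc <= (1 - t) * Wa + t * Wb ->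
  (1 - t) * (1 - Wa / d) + t * (1 - Wb / d) <= 1 - Wc / d.
Proof.
move=> d0 le.
have : Wc / d <= ((1 - t) * Wa + t * Wb) / d by apply: ler_wpM2r => //; rewrite invr_ge0.
have -> : ((1 - t) * Wa + t * Wb) / d = (1 - t) * (Wa / d) + t * (Wb / d) by ring.
move=> h; have -> : (1 - t) * (1 - Wa / d) + t * (1 - Wb / d) =
   1 - ((1 - t) * (Wa / d) + t * (Wb / d)) by ring.
by rewrite lerD2l lerN2.
Qed.

End S.

Theorem mainTheorem1 (R : realType) (V : finType) (H : {set {set V}})
  (w : {set V} -> R) :
  weights_pos H w -> edges_ge2 H -> connected_hg H ->
  (forall u v : V, u != v -> concave_on01 (fun alpha => kappa_vert H w alpha u v)) /\
  (forall h : {set V}, h \in H -> concave_on01 (fun alpha => kappa_edge H w alpha h)).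
Proof.
move=> wp e2 con; split.
  move=> u v uv a b t ha hb ht /=.
  have [s /and5P[sn sH us vs _]] := con u v uv.
  case: s sn sH us vs => // h0 s _ /= /andP[h0H sH] uh0 vl.
  have lH : last h0 s \in H.
    by move/allP: sH => /(_ (last h0 s)); case: (s) => //= ? ? /(_ (mem_last _ _)).
  apply: conc_aux; first exact: (@dist_ge0 _ _ _ _ wp _ _).
  exact: (@W1mu_conv _ _ _ _ wp e2 _ _ _ _ _ _ _ h0H uh0 lH vl ha hb ht).
move=> h hh a b t ha hb ht /=.
apply: conc_aux.
  apply: inf_ge0 => // r [x [y [_ _ _ ->]]]; exact: (@dist_ge0 _ _ _ _ wp _ _).
rewrite /W_edge !mulr_sumr -big_split /=; apply: ler_sum => x xh.
rewrite !mulr_sumr -big_split /=; apply: ler_sum => y /andP[yh _].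
exact: (@W1mu_conv _ _ _ _ wp e2 _ _ _ _ _ _ _ hh xh hh yh ha hb ht).
Qed.
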